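(* Every finite tree is a compact visibility graph.
   Context: Given a family of pairwise disjoint nonempty connected subsets (''regions'') of $\mathbb{R}^2$, a sightline is a closed line segment $\overline{ab}$ with $a\in A$, $b\in B$ for two different regions $A\neq B$ of the family, such that the segment intersects no region of the family other than $A$ and $B$. A graph $G$ is a compact visibility graph if there is such a family of compact connected nonempty regions, one for each vertex of $G$, such that two distinct vertices are adjacent in $G$ if and only if there is a sightline between their regions. *)

(* Defs.v *)
From HB Require Import structures.
From mathcomp Require Import all_boot all_order all_algebra.
From mathcomp Require Import all_classical all_reals all_analysis.
Set Implicit Arguments. Unset Strict Implicit. Unset Printing Implicit Defensive.
Import Order.TTheory GRing.Theory Num.Theory.
Import numFieldNormedType.Exports.
Local Open Scope classical_set_scope.
Local Open Scope ring_scope.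

Definition segment {R : realType} (a b : R * R) : set (R * R) :=
  [set p | exists2 t : R, 0 <= t <= 1 &
     p = ((1 - t) * a.1 + t * b.1, (1 - t) * a.2 + t * b.2)].

Definition has_sightline {R : realType} {V : Type} (A : V -> set (R * R))
  (v w : V) : Prop :=
  exists a b, A v a /\ A w b /\
    forall u, u <> v -> u <> w -> segment a b `&` A u = set0.

Definition compact_visibility_graph {R : realType} (V : finType) (e : rel V) : Prop :=
  exists A : V -> set (R * R),
    (forall v, compact (A v) /\ connected (A v) /\ A v !=set0) /\
    (forall v w, v <> w -> A v `&` A w = set0) /\
    (forall v w, v <> w -> (e v w <-> has_sightline A v w)).

Definition simple_graph {V : finType} (e : rel V) : Prop :=
  symmetric e /\ irreflexive e.

Definition graph_connected {V : finType} (e : rel V) : Prop :=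
  forall x y, connect e x y.

Definition acyclic {V : finType} (e : rel V) : Prop :=
  forall c : seq V, ucycle e c -> (size c < 3)%N.

Definition is_tree {V : finType} (e : rel V) : Prop :=
  simple_graph e /\ (0 < #|V|)%N /\ graph_connected e /\ acyclic e.

(* Main.v *)
Require Import Defs.
From HB Require Import structures.
From mathcomp Require Import all_boot all_order all_algebra.
From mathcomp Require Import all_classical all_reals all_analysis.
From mathcomp Require Import zify ring lra.
Set Implicit Arguments. Unset Strict Implicit. Unset Printing Implicit Defensive.

Section Comb.
Variables (V : finType) (e : rel V).
Hypothesis esym : symmetric e.
Hypothesis eirr : irreflexive e.
Hypothesis eacy : acyclic e.
Hypothesis econ : graph_connected e.

Definition Inv (r : V) (S : {set V}) (p : V -> V) (d : V -> nat) :=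
  [/\ r \in S, d r = 0,
   (forall v, v \in S -> v != r -> [/\ p v \in S, d v = (d (p v)).+1 & e (p v) v]) &
   (forall u w, u \in S -> w \in S -> e u w -> (u != r /\ p u = w) \/ (w != r /\ p w = u))].

Lemma exit_path (S : {set V}) q a : a \in S -> path e a q -> last a q \notin S ->
  exists y x, [/\ y \in S, x \notin S & e y x].
Proof.
elim: q a => [|b q IH] a aS /=; first by rewrite aS.
case/andP => eab pq lq.
case: (boolP (b \in S)) => bS; first exact: IH bS pq lq.
by exists a, b.
Qed.

Lemma inv_connect r S p d : Inv r S p d ->
  forall v, v \in S -> connect [rel a b | [&& e a b, a \in S & b \in S]] v r.
Proof.
case=> rS dr Hp _ v vS.
have [k] := ubnP (d v); elim: k v vS => // k IH v vS dv.
case: (eqVneq v r) => [->|vr]; first exact: connect0.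
have [pS dpv epv] := Hp v vS vr.
apply: (@connect_trans _ _ (p v) v r).
  by apply: connect1; rewrite /= vS pS andbT esym epv.
by apply: IH => //; rewrite dpv in dv.
Qed.

Lemma uniq_nb r S p d x y w : Inv r S p d -> x \notin S -> y \in S -> w \in S ->
  e y x -> e x w -> w = y.
Proof.
move=> I xS yS wS eyx exw.
apply/eqP; apply/negPn/negP => wy.
set eS := [rel a b | [&& e a b, a \in S & b \in S]].
have sS : symmetric eS by move=> a b; rewrite /= esym [(b \in S) && _]andbC.
have cyw : connect eS y w.
  have h1 := inv_connect I yS; have h2 := inv_connect I wS.
  rewrite (sym_connect_sym sS) in h2.
  exact: connect_trans h1 h2.
case/connectP: cyw => q pq lq.
move: lq; case: (shortenP pq) => q' pq' uq' sub lq.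
have allS : forall z, z \in y :: q' -> z \in S.
  move=> z; rewrite inE => /orP[/eqP->//|zq].
  have zq0 := sub z zq.
  have : all (fun z => z \in S) q.
    move: (y) yS pq; elim: (q) => //= b q0 IHq a aS /andP[/and3P[_ _ bS] pq0].
    by rewrite bS (IHq b bS pq0).
  by move/allP; apply.
have := eacy (c := x :: y :: q').
rewrite /ucycle /= rcons_path -lq (esym w x) exw andbT (esym x y) eyx /=.
have -> : path e y q'.
  by apply: sub_path pq' => a b /= /andP[].
have -> : x \notin y :: q'.
  by apply/negP => /allS; rewrite (negbTE xS).
move: uq'; rewrite /= => /andP[-> ->] /(_ isT).
case: q' {pq' sub allS} lq => [/= wy'|]; last by [].
by rewrite wy' eqxx in wy.
Qed.

Lemma grow r k : 0 < k <= #|V| -> exists (S : {set V}) (p : V -> V) (d : V -> nat), #|S| = k /\ Inv r S p d.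
Proof.
elim: k => [//|[|k] IH] hk.
  exists [set r], id, (fun _ => 0); split; first exact: cards1.
  split => //; first by rewrite inE.
    by move=> v; rewrite inE => ->.
  by move=> u w; rewrite !inE => /eqP-> /eqP->; rewrite eirr.
have [S [p [d [cS I]]]] := IH (ltac:(by move: hk => /andP[_ /ltnW ->])).
have [v vS] : exists v, v \notin S.
  case: (pickP (fun v => v \notin S)) => [v vS|all]; first by exists v.
  have ST : S = [set: V]%SET by apply/setP => z; rewrite inE; move: (all z) => /= /negbFE.
  by move: hk; rewrite -cS ST cardsT ltnn andbF.
have := econ r v => /connectP[q pq lq].
case: (I) => rS dr Hp He.
have [y [x [yS xS eyx]]] := exit_path rS pq (ltac:(by rewrite -lq)).
exists (x |: S), (fun z => if z == x then y else p z),
  (fun z => if z == x then (d y).+1 else d z).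
split; first by rewrite cardsU1 xS cS.
have rx : r != x by apply/eqP => rx; rewrite -rx rS in xS.
have yx : y != x by apply/eqP => yx; rewrite -yx yS in xS.
split.
- by rewrite inE rS orbT.
- by rewrite (negbTE rx).
- move=> z; rewrite !inE; case: (eqVneq z x) => [-> _ _|zx /= zS zr].
    by rewrite (negbTE yx) yS orbT.
  have [pS dz ez] := Hp z zS zr.
  have px : p z != x by apply/eqP => px; rewrite -px pS in xS.
  by rewrite (negbTE px) pS orbT.
- move=> u w; rewrite !inE.
  case: (eqVneq u x) => [->|ux]; case: (eqVneq w x) => [->|wx] /=.
  + by rewrite eirr.
  + move=> _ wS exw; left; split; first by rewrite eq_sym.
    by rewrite (uniq_nb I xS yS wS eyx exw).
  + move=> uS _ eux; right; split; first by rewrite eq_sym.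
    by rewrite (uniq_nb I xS yS uS eyx) // esym.
  + move=> uS wS euw; exact: He.
Qed.

Lemma tree_struct (r : V) : exists (p : V -> V) (d : V -> nat),
  [/\ d r = 0, (forall v, v != r -> d v = (d (p v)).+1) &
   (forall u w, e u w <-> (u != r /\ p u = w) \/ (w != r /\ p w = u))].
Proof.
have [S [p [d [cS [rS dr Hp He]]]]] := @grow r #|V| (ltac:(by rewrite leqnn andbT; apply/card_gt0P; exists r)).
have ST : S = [set: V]%SET.
  by apply/eqP; rewrite eqEcard finset.subsetT cardsT cS leqnn.
exists p, d; split => //.
  by move=> v vr; have [] := Hp v (ltac:(by rewrite ST inE)) vr.
move=> u w; split; first by apply: He; rewrite ST inE.
case=> [[ur <-]|[wr <-]].
  by have [_ _ ] := Hp u (ltac:(by rewrite ST inE)) ur; rewrite esym.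
by have [_ _ ] := Hp w (ltac:(by rewrite ST inE)) wr.
Qed.
End Comb.

Import Order.TTheory GRing.Theory Num.Theory.
Import numFieldNormedType.Exports.
Local Open Scope classical_set_scope.
Local Open Scope ring_scope.

Section Geom.
Variables (R : realType) (V : finType) (r : V) (p : V -> V) (d : V -> nat).
Hypothesis dr : d r = 0.
Hypothesis dp : forall v, v != r -> d v = (d (p v)).+1.

Definition nV := #|V|.
Definition B := nV.+2.
Definition F := (\max_(v : V) d v).+1.
Definition iv (v : V) : nat := (enum_rank v).+1.
Fixpoint Nf (k : nat) (v : V) : nat :=
  if k is k'.+1 then (if v == r then 0 else B * Nf k' (p v) + iv v)%N else 0%N.
Definition N v := Nf (d v) v.
Definition Sc k := (B ^ (F - k))%N.
Definition X v k : R := ((B * N v + k) * Sc (d v).+1)%:R.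
Definition Y v : R := (F - d v)%:R.
Definition hbar v := [set q : R * R | X v 1 <= q.1 <= X v nV.+1 /\ q.2 = Y v].
Definition wall v k := [set q : R * R | q.1 = X v k /\ 0 <= q.2 <= Y v].
Definition A v := \bigcup_(k in [set` iota 1 nV.+1]) (hbar v `|` wall v k).

Lemma dF v : (d v < F)%N.
Proof. by rewrite ltnS; apply: (leq_bigmax v). Qed.

Lemma iv_ge1 v : (1 <= iv v)%N. Proof. by []. Qed.
Lemma iv_le v : (iv v <= nV)%N. Proof. exact: ltn_ord. Qed.

Lemma Sc_gt0 k : (0 < Sc k)%N. Proof. by rewrite expn_gt0. Qed.

Lemma Sc_succ k : (k < F)%N -> Sc k = (B * Sc k.+1)%N.
Proof. by move=> h; rewrite /Sc -expnS subnSK. Qed.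

Lemma d0 v : d v = 0%N -> v = r.
Proof. by move=> h; apply/eqP/negPn/negP => /dp; rewrite h. Qed.

Lemma N_root : N r = 0%N.
Proof. by rewrite /N dr. Qed.

Lemma N_par v : v != r -> N v = (B * N (p v) + iv v)%N.
Proof. by move=> vr; rewrite /N (dp vr) /= (negbTE vr). Qed.

Lemma N_inj u w : N u = N w -> u = w.
Proof.
have key : forall v, v != r -> (N v %% B)%N = iv v.
  move=> v vr; rewrite N_par // mulnC modnMDl modn_small //.
  by have := iv_le v; rewrite /B; lia.
case: (eqVneq u r) => [->|ur]; case: (eqVneq w r) => [->|wr] //.
- by rewrite N_root => h; move: (key w wr); rewrite -h mod0n; have := iv_ge1 w; lia.
- by rewrite N_root => h; move: (key u ur); rewrite h mod0n; have := iv_ge1 u; lia.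
- move=> h; have := key u ur; rewrite h key // => /succn_inj /ord_inj.
  by move/enum_rank_inj.
Qed.

Lemma X_mono v k1 k2 : (k1 <= k2)%N -> X v k1 <= X v k2.
Proof. by move=> h; rewrite ler_nat leq_mul2r leq_add2l h orbT. Qed.

Lemma Xbounds v k : (1 <= k <= nV.+1)%N ->
  (N v * Sc (d v))%:R < X v k < ((N v).+1 * Sc (d v))%:R.
Proof.
move=> hk; rewrite /X !ltr_nat (Sc_succ (dF v)).
have := Sc_gt0 (d v).+1; set s := Sc _; rewrite /B => hs.
apply/andP; split; nia.
Qed.

Lemma A_mem v q : A v q -> exists k, (1 <= k <= nV.+1)%N /\ (hbar v q \/ wall v k q).
Proof.
case=> k /= hk hq; exists k; split => //; move: hk; rewrite -/(iota 1 nV.+1) mem_iota; lia.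
Qed.

Lemma Y_ge0 v : 0 <= Y v. Proof. by rewrite /Y ler0n. Qed.

Lemma Apt v q : A v q ->
  [/\ 0 <= q.2 <= Y v, (N v * Sc (d v))%:R < q.1 < ((N v).+1 * Sc (d v))%:R &
      (q.2 < Y v -> exists M, q.1 = (M * Sc (d v).+1)%:R)].
Proof.
case/A_mem => k [hk [[/andP[h1 h2] h3]|[h1 h2]]].
- split; first by rewrite h3 Y_ge0 lexx.
  + have /andP[l _] := @Xbounds v 1%N isT.
    have /andP[_ u] := @Xbounds v nV.+1 (ltac:(by rewrite leqnn)).
    by rewrite (lt_le_trans l h1) (le_lt_trans h2 u).
  + by rewrite h3 ltxx.
- split => //; first by rewrite h1; exact: Xbounds.
  by move=> _; exists (B * N v + k)%N; rewrite h1.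
Qed.

Lemma Yrel u w : (d w < d u)%N -> Y u + 1 <= Y w.
Proof.
move=> h; rewrite /Y -[1]/(1%N%:R) -natrD ler_nat; have := dF u; lia.
Qed.

Lemma blockfree u w q : w != u -> (d w <= d u)%N -> A w q -> q.2 < Y u + 1 ->
  ~ ((N u * Sc (d u))%:R < q.1 < ((N u).+1 * Sc (d u))%:R).
Proof.
move=> wu dwu Aq hq /andP[h1 h2].
have [/andP[q20 q2Y] /andP[k1 k2] wq] := Apt Aq.
move: dwu; rewrite leq_eqVlt => /orP[/eqP e|lt].
  have a1 := lt_trans k1 h2; have a2 := lt_trans h1 k2.
  move: a1 a2; rewrite e !ltr_nat !ltn_pmul2r ?Sc_gt0 // => a1 a2.
  have : N w = N u by lia.
  by move/N_inj => ew; rewrite ew eqxx in wu.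
have [M hM] := wq (lt_le_trans hq (Yrel lt)).
have eS : Sc (d w).+1 = (B ^ (d u - (d w).+1) * Sc (d u))%N.
  rewrite /Sc -expnD; congr (expn _ _); have := dF u; lia.
move: h1 h2; rewrite hM eS mulnA !ltr_nat !ltn_pmul2r ?Sc_gt0 //; lia.
Qed.
Lemma aff_cont (a b : R) : continuous (fun t : R => (1 - t) * a + t * b).
Proof.
move=> x.
apply: cvgD.
  apply: cvgM; last exact: cvg_cst.
  apply: cvgB; [exact: cvg_cst|exact: cvg_id].
apply: cvgM; [exact: cvg_id|exact: cvg_cst].
Qed.

Lemma aff_contB (a b c : R) : continuous (fun t : R => (1 - t) * a + t * b - c).
Proof. move=> x; apply: cvgB; [exact: aff_cont|exact: cvg_cst]. Qed.
Lemma aff_contB' (a b c : R) : continuous (fun t : R => c - ((1 - t) * a + t * b)).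
Proof. move=> x; apply: cvgB; [exact: cvg_cst|exact: aff_cont]. Qed.

Lemma cross (a b : R * R) (x1 x2 y1 y2 : R) :
  x1 < a.1 < x2 -> y1 < a.2 < y2 -> ~ (x1 < b.1 < x2 /\ y1 < b.2 < y2) ->
  exists t : R, 0 <= t <= 1 /\
    x1 <= (1 - t) * a.1 + t * b.1 <= x2 /\ y1 <= (1 - t) * a.2 + t * b.2 <= y2 /\
    ((1 - t) * a.1 + t * b.1 = x1 \/ (1 - t) * a.1 + t * b.1 = x2 \/
     (1 - t) * a.2 + t * b.2 = y1 \/ (1 - t) * a.2 + t * b.2 = y2).
Proof.
move=> /andP[ha1 ha2] /andP[ha3 ha4] hb.
set f1 := fun t : R => (1 - t) * a.1 + t * b.1 - x1.
set f2 := fun t : R => x2 - ((1 - t) * a.1 + t * b.1).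
set f3 := fun t : R => (1 - t) * a.2 + t * b.2 - y1.
set f4 := fun t : R => y2 - ((1 - t) * a.2 + t * b.2).
set phi := (f1 \min f2) \min (f3 \min f4).
have cphi : continuous phi.
  apply: min_fun_continuous; apply: min_fun_continuous;
    (exact: aff_contB || exact: aff_contB').
have phi0 : 0 < phi 0.
  rewrite /phi /f1 /f2 /f3 /f4 /= !lt_min !subr0 !mul1r !mul0r !addr0 !subr_gt0.
  by rewrite ha1 ha2 ha3 ha4.
have phi1 : phi 1 <= 0.
  rewrite leNgt; apply/negP => H; apply: hb.
  move: H; rewrite /phi /f1 /f2 /f3 /f4 /= !lt_min !subrr !mul1r !mul0r !add0r !subr_gt0.
  by case/and3P => -> -> ->.
have [c hc phic] := @IVT R phi 0 1 0 ler01 (continuous_subspaceT cphi)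
  (ltac:(by rewrite ge_min le_max phi1 (ltW phi0) orbT)).
exists c; move: hc; rewrite in_itv /= => hc; split => //.
have : 0 <= phi c by rewrite phic.
rewrite /phi /f1 /f2 /f3 /f4 /= !le_min !subr_ge0 => /and3P[/andP[h1 h2] h3 h4].
rewrite h1 h2 h3 h4; split => //; split => //.
move: phic; rewrite /phi /f1 /f2 /f3 /f4 /=.
rewrite /Order.min; repeat case: ifP => _; move/eqP; rewrite ?subr_eq0 => /eqP H;
 [left|right;left|right;right;left|right;right;right] => //.
all: by [].
Qed.
Lemma hcont (y : R) : continuous (fun s : R => (s, y)).
Proof. move=> x; rewrite /continuous_at. exact: (cvg_pair (cvg_id) (cvg_cst y)). Qed.
Lemma vcont (y : R) : continuous (fun s : R => (y, s)).
Proof. move=> x; rewrite /continuous_at. exact: (cvg_pair (cvg_cst y) (cvg_id)). Qed.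

Lemma hbar_eq (x1 x2 y : R) : [set q : R * R | x1 <= q.1 <= x2 /\ q.2 = y] = (fun s => (s, y)) @` `[x1, x2].
Proof.
apply/seteqP; split => [[a b] /= [H ->]|q [s /= Hs <-] /=].
  by exists a => //=; rewrite in_itv /=.
by move: Hs; rewrite in_itv /= => ->.
Qed.

Lemma hbar_cc (x1 x2 y : R) : compact [set q : R * R | x1 <= q.1 <= x2 /\ q.2 = y] /\ connected [set q : R * R | x1 <= q.1 <= x2 /\ q.2 = y].
Proof.
rewrite hbar_eq; split.
  apply: continuous_compact; last exact: segment_compact.
  by apply: continuous_subspaceT; exact: hcont.
apply: connected_continuous_connected.
  by apply/connected_intervalP; exact: interval_is_interval.
by apply: continuous_subspaceT; exact: hcont.
Qed.

Lemma vbar_eq (x y1 y2 : R) : [set q : R * R | q.1 = x /\ y1 <= q.2 <= y2] = (fun s => (x, s)) @` `[y1, y2].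
Proof.
apply/seteqP; split => [[a b] /= [-> H]|q [s /= Hs <-] /=].
  by exists b => //=; rewrite in_itv /=.
by move: Hs; rewrite in_itv /= => ->.
Qed.

Lemma vbar_cc (x y1 y2 : R) : compact [set q : R * R | q.1 = x /\ y1 <= q.2 <= y2] /\ connected [set q : R * R | q.1 = x /\ y1 <= q.2 <= y2].
Proof.
rewrite vbar_eq; split.
  apply: continuous_compact; last exact: segment_compact.
  by apply: continuous_subspaceT; exact: vcont.
apply: connected_continuous_connected.
  by apply/connected_intervalP; exact: interval_is_interval.
by apply: continuous_subspaceT; exact: vcont.
Qed.

Lemma A_cc v : [/\ compact (A v), connected (A v) & A v !=set0].
Proof.
have hk : forall k, (1 <= k <= nV.+1)%N -> (hbar v `|` wall v k) (X v k, Y v).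
  by move=> k hk; right; split => //=; rewrite Y_ge0 lexx.
have hb : hbar v (X v 1, Y v).
  by split => //=; rewrite lexx X_mono.
split.
- rewrite /A bigcup_seq; apply: bigsetU_compact => k _.
  apply: compactU; [exact: (hbar_cc _ _ _).1|exact: (vbar_cc _ _ _).1].
- apply: bigcup_connected.
    by exists (X v 1, Y v) => k _; left; exact: hb.
  move=> k; rewrite /= -/(iota 1 nV.+1) mem_iota => hk'.
  apply: connectedU; [|exact: (hbar_cc _ _ _).2|exact: (vbar_cc _ _ _).2].
  exists (X v k, Y v); split; last by split => //=; rewrite Y_ge0 lexx.
  split => //=; rewrite !X_mono //; lia.
- exists (X v 1, Y v), 1%N; first by rewrite /= inE eqxx.
  by left; exact: hb.
Qed.

Lemma seg_sub (a b : R * R) : segment a b `<=` segment b a.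
Proof.
move=> q [t /andP[t0 t1] ->]; exists (1 - t).
  by apply/andP; split; lra.
by congr (_, _); ring.
Qed.

Lemma seg_sym (a b : R * R) : segment a b = segment b a.
Proof. by apply/seteqP; split; apply: seg_sub. Qed.

Lemma hs_sym (v w : V) : has_sightline A v w -> has_sightline A w v.
Proof.
move=> [a [b [Aa [Ab H]]]]; exists b, a; split => //; split => //.
by move=> u uw uv; rewrite seg_sym; apply: H.
Qed.

Lemma iv_in u : [set` iota 1 nV.+1] (iv u).
Proof. rewrite /= -/(iota 1 nV.+1) mem_iota; have := iv_le u; have := iv_ge1 u; lia. Qed.
Lemma iv1_in u : [set` iota 1 nV.+1] (iv u).+1.
Proof. rewrite /= -/(iota 1 nV.+1) mem_iota; have := iv_le u; have := iv_ge1 u; lia. Qed.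

Lemma Xpar u : u != r ->
  [/\ X (p u) (iv u) = (N u * Sc (d u))%:R,
      X (p u) (iv u).+1 = ((N u).+1 * Sc (d u))%:R,
      X (p u) 1 <= (N u * Sc (d u))%:R &
      ((N u).+1 * Sc (d u))%:R <= X (p u) nV.+1].
Proof.
move=> ur; rewrite /X (N_par ur) (dp ur) addnS; split => //;
  rewrite ler_nat leq_mul2r; apply/orP; right; have := iv_le u; have := iv_ge1 u; lia.
Qed.

Lemma Ypar u : u != r -> Y (p u) = Y u + 1.
Proof.
move=> ur; rewrite /Y (dp ur) -[1]/(1%N%:R) -natrD; congr (_%:R).
have := dF u; rewrite (dp ur); lia.
Qed.

Lemma block u w : u != w -> (d w <= d u)%N ->
  ~ ((u != r /\ p u = w) \/ (w != r /\ p w = u)) -> ~ has_sightline A u w.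
Proof.
move=> uw dwu nadj [a [b [Aa [Ab H]]]].
have ur : u != r.
  apply/eqP => ur; move: dwu; rewrite ur dr leqn0 => /eqP /d0 wr.
  by rewrite ur wr eqxx in uw.
set m := p u.
have dum : d u = (d m).+1 := dp ur.
have mu : m != u by apply/eqP => mu; move: dum; rewrite mu => /n_Sn.
have mw : m != w by apply/eqP => mw; apply: nadj; left.
have YmYu : Y m = Y u + 1 := Ypar ur.
have wu : w != u by rewrite eq_sym.
have [/andP[a20 a2Y] /andP[a1l a1r] _] := Apt Aa.
have [/andP[b20 b2Y] _ _] := Apt Ab.
have [t [/andP[t0 t1] [/andP[c1l c1r] [/andP[c2l c2r] hc]]]] :=
  @cross a b (N u * Sc (d u))%:R ((N u).+1 * Sc (d u))%:R (-1) (Y m)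
    (ltac:(by rewrite a1l a1r)) (ltac:(apply/andP; split; rewrite ?YmYu; lra))
    (ltac:(move=> [hb1 /andP[_ hb2]]; rewrite YmYu in hb2;
           exact: (blockfree wu dwu Ab hb2 hb1))).
set c := ((1 - t) * a.1 + t * b.1, (1 - t) * a.2 + t * b.2).
have c2pos : 0 <= c.2.
  rewrite /c /=; apply: addr_ge0; apply: mulr_ge0 => //; lra.
have [X1 X2 X3 X4] := Xpar ur.
have : A m c.
  case: hc => [h|[h|[h|h]]].
  - exists (iv u); first exact: iv_in.
    by right; split; [rewrite /c /= h X1|rewrite c2pos /= c2r].
  - exists (iv u).+1; first exact: iv1_in.
    by right; split; [rewrite /c /= h X2|rewrite c2pos /= c2r].
  - by move: c2pos; rewrite /c /= h; lra.
  - exists 1%N; first by rewrite /= inE eqxx.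
    left; split; last by rewrite /c /= h.
    by rewrite (le_trans X3 c1l) (le_trans c1r X4).
move=> Amc.
have := H m (elimN eqP mu) (elimN eqP mw); rewrite -subset0 => /(_ c); apply; split => //.
by exists t => //; rewrite t0 t1.
Qed.

Lemma sight u : u != r -> has_sightline A u (p u).
Proof.
move=> ur; set m := p u; set x0 := X u 1.
have [X1 X2 X3 X4] := Xpar ur.
have /andP[xl xr] := @Xbounds u 1%N isT.
have /andP[ml _] := @Xbounds m 1%N isT.
have /andP[_ mr] := @Xbounds m nV.+1 (ltac:(by rewrite leqnn)).
have xm1 : X m 1 <= x0 by apply: le_trans X3 (ltW xl).
have xm2 : x0 <= X m nV.+1 by apply: le_trans (ltW xr) X4.
have YmYu : Y m = Y u + 1 := Ypar ur.
have dum : d u = (d m).+1 := dp ur.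
exists (x0, Y u), (x0, Y m); split.
  exists 1%N; first by rewrite /= inE eqxx.
  by left; split => //=; rewrite lexx X_mono.
split.
  exists 1%N; first by rewrite /= inE eqxx.
  by left; split => //=; rewrite xm1 xm2.
move=> z zu zm; apply/seteqP; split => // q [[t /andP[t0 t1] ->] Az].
have e1 : (1 - t) * x0 + t * x0 = x0 by ring.
have e2 : (1 - t) * Y u + t * Y m = Y u + t by rewrite YmYu; ring.
rewrite /= e1 e2 in Az.
have [/andP[_ qY] _ _] := Apt Az; rewrite /= in qY.
have zu' : z != u by apply/eqP.
have zm' : z != m by apply/eqP.
case: (ltngtP (d z) (d u)) => h.
- apply: (blockfree zm' _ Az); first by move: h; rewrite dum ltnS.
    by rewrite /= YmYu; lra.
  by rewrite /=; apply/andP; split; [exact: lt_le_trans ml xm1|exact: le_lt_trans xm2 mr].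
- have := Yrel h; lra.
- apply: (blockfree zu' _ Az); first by rewrite h.
    have YzYu : Y z = Y u by rewrite /Y h.
    rewrite YzYu in qY; rewrite /=; lra.
  by rewrite /= xl xr.
Qed.

Lemma geom_main (e : rel V) :
  (forall u w, e u w <-> (u != r /\ p u = w) \/ (w != r /\ p w = u)) ->
  @compact_visibility_graph R V e.
Proof.
move=> He; exists A; split.
  by move=> v; have [? ? ?] := A_cc v.
split.
  move=> v w vw; apply/seteqP; split => // q [Av Aw].
  have [/andP[_ vY] /andP[v1 v2] _] := Apt Av.
  have [/andP[_ wY] /andP[w1 w2] _] := Apt Aw.
  case: (leqP (d v) (d w)) => h.
    apply: (blockfree (u := w) (w := v) (q := q)) => //; first by apply/eqP.
      by lra.
    by rewrite w1 w2.
  apply: (blockfree (u := v) (w := w) (q := q)) => //; first by apply/eqP => wv; apply: vw.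
    exact: ltnW.
    by lra.
  by rewrite v1 v2.
move=> v w vw; rewrite He; split.
  case=> [[vr <-]|[wr <-]]; first exact: sight.
  by apply: hs_sym; exact: sight.
move=> hs; case: (pselect ((v != r /\ p v = w) \/ (w != r /\ p w = v))) => // nadj.
exfalso; case: (leqP (d w) (d v)) => h.
  by apply: (block _ h nadj hs); apply/eqP.
apply: (block (u := w) (w := v)) (ltnW h) _ (hs_sym hs).
  by apply/eqP => wv; apply: vw.
by case=> ?; apply: nadj; [right|left].
Qed.
End Geom.

Theorem corollary2 (R : realType) (V : finType) (e : rel V) :
  is_tree e -> @compact_visibility_graph R V e.
Proof.
case=> [[esym eirr] [card [con acy]]].
case/card_gt0P: card => r _.
have [p [d [dr dp He]]] := tree_struct esym eirr acy con r.
exact: (@geom_main R V r p d dr dp e He).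
Qed.
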